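(* Let $m,n$ be nonnegative integers with $0\leqslant m\leqslant n$, let $\varepsilon\in\{+1,-1\}$, and let $z\in\mathbb{C}\setminus(-\infty,1]$. Then \begin{align*} \frac{\mathrm{d}^{m}}{\mathrm{d}z^{m}}\bigl[P_{n}(z)\ln(z+\varepsilon)\bigr] &= \frac{(2m)!}{2^{m}m!}C_{n-m}^{(m+1/2)}(z)\ln(z+\varepsilon)\\ &\quad -(-\varepsilon)^{n}(-1)^{m}(z+\varepsilon)^{-m}\sum_{k=0}^{m-1}\varepsilon^{k}\frac{(k+n)!\,(m-k-1)!}{k!\,(n-k)!}\left(\frac{z+\varepsilon}{2}\right)^{k}\\ &\quad +\frac{(-\varepsilon)^{n+m}}{2^{m}}\sum_{k=0}^{n-m}(-\varepsilon)^{k}\frac{(k+n+m)!}{k!\,(k+m)!\,(n-m-k)!}\,[\psi(k+m+1)-\psi(k+1)]\left(\frac{z+\varepsilon}{2}\right)^{k}. \end{align*}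
   Context: $P_n(z)$ denotes the Legendre polynomial of degree $n$. $C_{j}^{(\alpha)}(z)$ denotes the Gegenbauer (ultraspherical) polynomial of degree $j$ and parameter $\alpha$. $\psi(\zeta)=\Gamma'(\zeta)/\Gamma(\zeta)$ is the digamma function. The complex plane is cut along the real axis from $-\infty$ to $+1$; for $z\in\mathbb{C}\setminus(-\infty,1]$, $\ln(z\pm1)$ denotes the principal branch of the logarithm. The case $\varepsilon=+1$ concerns $\ln(z+1)$ and the case $\varepsilon=-1$ concerns $\ln(z-1)$. Empty sums are zero. *)

(* Defs.v *)
From Stdlib Require Import Reals ClassicalEpsilon Factorial.
From Coquelicot Require Import Coquelicot.
Open Scope R_scope.

Fixpoint Csum (f : nat -> C) (n : nat) : C :=
  match n with O => RtoC 0 | S n' => Cplus (Csum f n') (f n') end.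

Fixpoint poch (a : R) (r : nat) : R :=
  match r with O => 1 | S r' => poch a r' * (a + INR r') end.

Definition Legendre (n : nat) (z : C) : C :=
  Cmult (RtoC (/ 2 ^ n))
    (Csum (fun k => Cmult (RtoC ((-1) ^ k * Binomial.C n k * Binomial.C (2*n - 2*k) n))
                          (Cpow z (n - 2*k)))
          (S (Nat.div2 n))).

Definition Gegenbauer (j : nat) (a : R) (z : C) : C :=
  Csum (fun k => Cmult (RtoC ((-1) ^ k * poch a (j - k) / (INR (fact k) * INR (fact (j - 2*k)))))
                       (Cpow (Cmult (RtoC 2) z) (j - 2*k)))
       (S (Nat.div2 j)).

(* digamma function, Gauss' limit formula:
   psi(x) = lim_{N->oo} ( ln N - sum_{j=0}^{N} 1/(x+j) ) *)
Definition digamma (x : R) : R :=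
  real (Lim_seq (fun N => ln (INR N) - sum_f_R0 (fun j => / (x + INR j)) N)).

(* principal argument in (-pi, pi]; off the cut (-oo,0] it equals
   2 atan(Im z / (|z| + Re z)) *)
Definition Carg (z : C) : R :=
  if Rle_dec (Cmod z + Re z) 0 then PI else 2 * atan (Im z / (Cmod z + Re z)).

Definition Cln (z : C) : C := (ln (Cmod z), Carg z).

Definition CDerive (f : C -> C) (z : C) : C :=
  epsilon (inhabits (RtoC 0)) (fun l => @is_derive C_AbsRing C_NormedModule f z l).

Fixpoint CDerive_n (m : nat) (f : C -> C) : C -> C :=
  match m with O => f | S m' => CDerive (CDerive_n m' f) end.

(* Main.v *)
Require Import Defs.
From Stdlib Require Import Reals Factorial Lia Lra ClassicalEpsilon.
From Coquelicot Require Import Coquelicot.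
Open Scope R_scope.

Notation CD f x l := (@is_derive C_AbsRing C_NormedModule f x l).

Lemma conv1 f x l : @is_derive C_AbsRing (AbsRing_NormedModule C_AbsRing) f x l -> CD f x l.
Proof. intros [H1 H2]. split.
 destruct H1 as [a b [M [HM HM']]]. constructor; auto. exists M; split; auto.
 intros x' Hx. specialize (H2 x' Hx). intros eps. specialize (H2 eps). exact H2.
Qed.
Lemma conv2 f x l : CD f x l -> @is_derive C_AbsRing (AbsRing_NormedModule C_AbsRing) f x l.
Proof. intros [H1 H2]. split.
 destruct H1 as [a b [M [HM HM']]]. constructor; auto. exists M; split; auto.
 intros x' Hx. specialize (H2 x' Hx). intros eps. specialize (H2 eps). exact H2.
Qed.

Lemma CD_eq f x l l' : CD f x l -> l = l' -> CD f x l'.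
Proof. intros H ->; exact H. Qed.

Definition Cnear (x : C) (P : C -> Prop) := exists d, 0 < d /\ forall y, Cmod (Cminus y x) < d -> P y.

Lemma CD_ext_near f g x l : Cnear x (fun t => f t = g t) -> CD f x l -> CD g x l.
Proof. intros [d [Hd H1]] H2. apply (is_derive_ext_loc f g x l); auto.
  exists (mkposreal d Hd). intros y Hy. apply H1; exact Hy. Qed.

Lemma CD_ext f g x l : (forall t, f t = g t) -> CD f x l -> CD g x l.
Proof. intros H1 H2; exact (is_derive_ext f g x l H1 H2). Qed.

Lemma CD_plus f g x a b : CD f x a -> CD g x b -> CD (fun y => Cplus (f y) (g y)) x (Cplus a b).
Proof. intros Ha Hb. exact (is_derive_plus f g x a b Ha Hb). Qed.

Lemma CD_mult f g x a b : CD f x a -> CD g x b ->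
  CD (fun y => Cmult (f y) (g y)) x (Cplus (Cmult a (g x)) (Cmult (f x) b)).
Proof. intros Ha Hb. apply conv1. exact (is_derive_mult f g x a b (conv2 _ _ _ Ha) (conv2 _ _ _ Hb) Cmult_comm). Qed.

Lemma CD_const c x : CD (fun _ => c) x (RtoC 0).
Proof. exact (is_derive_const c x). Qed.

Lemma CD_id x : CD (fun y => y) x (RtoC 1).
Proof. apply conv1. exact (is_derive_id x). Qed.

Lemma CD_comp f g x df dg : CD f (g x) df -> CD g x dg -> CD (fun y => f (g y)) x (Cmult dg df).
Proof. intros Hf Hg. exact (is_derive_comp f g x df dg Hf (conv2 _ _ _ Hg)). Qed.

Lemma CD_scal c f x a : CD f x a -> CD (fun y => Cmult c (f y)) x (Cmult c a).
Proof. intros H. eapply CD_eq. apply CD_mult. apply CD_const. exact H.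
  change (Cplus (Cmult 0 (f x)) (Cmult c a) = Cmult c a). ring. Qed.

Lemma CD_bound f x l :
  (forall eps, 0 < eps -> exists d, 0 < d /\ forall y, Cmod (Cminus y x) < d ->
      Cmod (Cminus (Cminus (f y) (f x)) (Cmult (Cminus y x) l)) <= eps * Cmod (Cminus y x)) ->
  CD f x l.
Proof.
  intros H. apply conv1. split. apply is_linear_scal_l.
  intros x' Hx'. apply (@is_filter_lim_locally_unique C_AbsRing (AbsRing_NormedModule C_AbsRing)) in Hx'. subst x'.
  intros eps. destruct (H eps (cond_pos eps)) as [d [Hd Hy]].
  exists (mkposreal d Hd). intros y Hy'.
  apply Hy. exact Hy'.
Qed.



Ltac Ceq := match goal with |- ?a = ?b => change (@eq C a b) end.
Ltac Cring := Ceq; ring.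
Ltac Cfield := Ceq; field.

Lemma Csum_ext f g n : (forall k, (k < n)%nat -> f k = g k) -> Csum f n = Csum g n.
Proof. induction n; intros H; simpl; auto. rewrite IHn by (intros; apply H; lia). rewrite H by lia. auto. Qed.

Lemma Csum_plus f g n : Csum (fun k => Cplus (f k) (g k)) n = Cplus (Csum f n) (Csum g n).
Proof. induction n; simpl. change (RtoC 0 = RtoC 0 + RtoC 0)%C. ring. rewrite IHn. ring. Qed.

Lemma Csum_mult_l c f n : Cmult c (Csum f n) = Csum (fun k => Cmult c (f k)) n.
Proof. induction n; simpl. ring. rewrite <- IHn. ring. Qed.

Lemma Csum_mult_r c f n : Cmult (Csum f n) c = Csum (fun k => Cmult (f k) c) n.
Proof. induction n; simpl. ring. rewrite <- IHn. ring. Qed.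

Lemma Csum_split f a b : Csum f (a + b) = Cplus (Csum f a) (Csum (fun k => f (a + k)%nat) b).
Proof. induction b; simpl. rewrite Nat.add_0_r. ring. rewrite Nat.add_succ_r. simpl. rewrite IHb. ring. Qed.

Lemma Csum_zero f n : (forall k, (k < n)%nat -> f k = RtoC 0) -> Csum f n = RtoC 0.
Proof. induction n; intros H; simpl; auto. rewrite IHn by (intros; apply H; lia). rewrite H by lia. ring. Qed.

Lemma Csum_first f n : Csum f (S n) = Cplus (f O) (Csum (fun k => f (S k)) n).
Proof. induction n. simpl. ring. change (Csum f (S (S n))) with (Cplus (Csum f (S n)) (f (S n))).
  rewrite IHn. simpl. ring. Qed.

Lemma CD_Csum (F : nat -> C -> C) dF n x : (forall k, (k < n)%nat -> CD (F k) x (dF k)) ->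
  CD (fun y => Csum (fun k => F k y) n) x (Csum dF n).
Proof. induction n; intros H; simpl. apply CD_const.
  apply CD_plus. apply IHn; intros; apply H; lia. apply H; lia. Qed.

Lemma CD_shift s x : CD (fun y => Cplus y s) x (RtoC 1).
Proof. eapply CD_eq. apply CD_plus. apply CD_id. apply CD_const. change (RtoC 1 + RtoC 0 = RtoC 1)%C. ring. Qed.

Lemma CD_pow_shift s k x :
  CD (fun y => Cpow (Cplus y s) k) x (Cmult (RtoC (INR k)) (Cpow (Cplus x s) (pred k))).
Proof.
  induction k. simpl. eapply CD_eq. apply CD_const. simpl. ring.
  simpl Cpow. eapply CD_eq. apply CD_mult. apply CD_shift. exact IHk.
  destruct k. simpl. ring.
  rewrite (S_INR (S k)), RtoC_plus. simpl pred. simpl Cpow. Cring.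
Qed.

Lemma Cmod_Cminus_sym a b : Cmod (Cminus a b) = Cmod (Cminus b a).
Proof. rewrite <- Cmod_opp. f_equal. change ((- (a + - b))%C = (b + - a)%C). ring. Qed.

Lemma Cmod_lower a b : Cmod a - Cmod (Cminus b a) <= Cmod b.
Proof. assert (Cmod a <= Cmod b + Cmod (Cminus a b)).
  replace a with (Cplus b (Cminus a b)) at 1 by (change (b + (a + - b) = a)%C; ring). apply Cmod_triangle.
  rewrite Cmod_Cminus_sym in H. lra. Qed.

Lemma Cmod_gt0 a : a <> RtoC 0 -> 0 < Cmod a.
Proof. intros; apply Cmod_gt_0; auto. Qed.

Lemma CD_inv x : x <> RtoC 0 -> CD Cinv x (Copp (Cinv (Cmult x x))).
Proof.
  intros Hx. apply CD_bound. intros eps He.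
  pose proof (Cmod_gt0 x Hx) as Hm. set (r := Cmod x) in *.
  exists (Rmin (r/2) (eps * r^3 / 2)). split.
  apply Rmin_glb_lt. lra. apply Rmult_lt_0_compat; [|lra]. apply Rmult_lt_0_compat; auto. apply pow_lt; auto.
  intros y Hy. assert (Hy1 : Cmod (Cminus y x) < r/2) by (eapply Rlt_le_trans; [exact Hy| apply Rmin_l]).
  assert (Hy2 : Cmod (Cminus y x) < eps * r^3/2) by (eapply Rlt_le_trans; [exact Hy| apply Rmin_r]).
  assert (Hyr : r/2 <= Cmod y) by (pose proof (Cmod_lower x y); unfold r in *; lra).
  assert (Hy0 : y <> RtoC 0). { intro E. rewrite E, Cmod_0 in Hyr. lra. }
  replace (Cminus (Cminus (Cinv y) (Cinv x)) (Cmult (Cminus y x) (Copp (Cinv (Cmult x x)))))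
    with (Cmult (Cmult (Cminus y x) (Cminus y x)) (Cinv (Cmult (Cmult x x) y))).
  2:{ field. split; auto. }
  rewrite Cmod_mult, Cmod_mult, Cmod_inv, !Cmod_mult. 2:{ repeat apply Cmult_neq_0; auto. }
  fold r. set (t := Cmod (Cminus y x)) in *.
  assert (0 <= t) by apply Cmod_ge_0.
  apply Rle_trans with (t * (t * (2 / r^3))).
  { replace (t * (t * (2 / r^3))) with (t * t * (2 / r^3)) by ring.
    apply Rmult_le_compat_l. nra.
    replace (2 / r^3) with (/ (r * r * (r/2))) by (field; lra).
    apply Rinv_le_contravar. apply Rmult_lt_0_compat; nra. apply Rmult_le_compat_l; nra. }
  rewrite (Rmult_comm eps). apply Rmult_le_compat_l; auto.
  apply Rle_trans with ((eps * r^3/2) * (2 / r^3)). apply Rmult_le_compat_r. left. apply Rdiv_lt_0_compat. lra. apply pow_lt; auto. lra.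
  right. field. lra.
Qed.

Definition Cexp (d : C) : C := (exp (fst d) * cos (snd d), exp (fst d) * sin (snd d)).

Lemma Cexp_plus p d : Cexp (Cplus p d) = Cmult (Cexp p) (Cexp d).
Proof. destruct p as [a b], d as [c e]. unfold Cexp, Cplus, Cmult; simpl.
  rewrite exp_plus, cos_plus, sin_plus. f_equal; ring. Qed.

Lemma Cmod_pos_of w : 0 < Cmod w + Re w -> 0 < Cmod w.
Proof. intros H. pose proof (re_le_Cmod w). pose proof (Cmod_ge_0 w).
  destruct (Rle_lt_dec (Cmod w) 0); [|lra]. assert (Cmod w = 0) by lra.
  rewrite H2 in H0. pose proof (Rabs_pos (Re w)). assert (Rabs (Re w) = 0) by lra.
  apply Rabs_eq_0 in H4. lra. Qed.

Lemma Carg_eq w : 0 < Cmod w + Re w -> Carg w = 2 * atan (Im w / (Cmod w + Re w)).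
Proof. intros H. unfold Carg. destruct (Rle_dec (Cmod w + Re w) 0); lra. Qed.

Lemma Cexp_Cln w : 0 < Cmod w + Re w -> Cexp (Cln w) = w.
Proof.
  intros H. pose proof (Cmod_pos_of w H) as Hr.
  unfold Cexp, Cln; simpl. rewrite Carg_eq by auto. rewrite exp_ln by auto.
  rewrite cos_2a, sin_2a, cos_atan, sin_atan.
  set (t := Im w / (Cmod w + Re w)).
  assert (Hs : 0 < 1 + t²) by (unfold Rsqr; nra).
  assert (Hq : sqrt (1 + t²) * sqrt (1 + t²) = 1 + t²) by (apply sqrt_sqrt; lra).
  assert (Hq0 : 0 < sqrt (1 + t²)) by (apply sqrt_lt_R0; lra).
  set (s := sqrt (1 + t²)) in *.
  destruct w as [a b]. unfold Re, Im in *; simpl in *.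
  assert (Hm : Cmod (a, b) * Cmod (a, b) = a * a + b * b).
  { unfold Cmod; simpl. rewrite sqrt_sqrt; nra. }
  set (r := Cmod (a,b)) in *. unfold Rsqr in *.
  assert (T1 : t * (r + a) = b) by (unfold t; field; lra).
  assert (T2 : (r + a) * (t * t) = r - a).
  { apply Rmult_eq_reg_l with (r + a); [|lra].
    replace ((r + a) * ((r + a) * (t * t))) with ((t * (r+a)) * (t * (r + a))) by ring.
    rewrite T1. nra. }
  assert (E1 : r * (1 - t * t) = a * (1 + t * t)).
  { assert (r * (1 - t * t) - a * (1 + t * t) = (r - a) - (r + a) * (t * t)) by ring. rewrite T2 in H0. lra. }
  assert (E2 : 2 * r * t = b * (1 + t * t)).
  { assert (2 * r * t - b * (1 + t * t) = t * ((r - a) - (r + a) * (t * t))) by (rewrite <- T1; ring).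
    rewrite T2 in H0. lra. }
  f_equal.
  - replace (r * (1 / s * (1 / s) - t / s * (t / s))) with (r * (1 - t * t) / (s * s)) by (field; lra).
    rewrite Hq, E1. field. lra.
  - replace (r * (2 * (t / s) * (1 / s))) with (2 * r * t / (s * s)) by (field; lra).
    rewrite Hq, E2. field. lra.
Qed.

Lemma abs_bd x B : Rabs x <= B -> -B <= x <= B.
Proof. intros; split_Rabs; lra. Qed.

Lemma exp_up a : a < 1 -> exp a <= / (1 - a).
Proof. intros H. pose proof (exp_ineq1_le (-a)). rewrite <- (Rinv_inv (exp a)).
  apply Rinv_le_contravar. lra. rewrite <- exp_Ropp. lra. Qed.

Lemma exp_bd a : Rabs a <= 1/2 -> 0 <= exp a - 1 - a <= 2 * (a * a).
Proof. intros H. apply abs_bd in H. pose proof (exp_ineq1_le a). pose proof (exp_up a).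
  split. lra. assert (exp a <= / (1 - a)) by (apply H1; lra).
  assert (/ (1 - a) - 1 - a = a * a / (1 - a)) by (field; lra).
  assert (a * a / (1 - a) <= 2 * (a * a)).
  { unfold Rdiv. replace (2 * (a * a)) with (a * a * 2) by ring. apply Rmult_le_compat_l. nra.
    replace 2 with (/ (1/2)) by field. apply Rinv_le_contravar; lra. }
  lra. Qed.

Lemma exp_le2 a : a <= 1/2 -> exp a <= 2.
Proof. intros H. apply Rle_trans with (/ (1 - a)). apply exp_up; lra.
  replace 2 with (/ (1/2)) by field. apply Rinv_le_contravar; lra. Qed.

Lemma sin_bd_pos b : 0 <= b <= 1/2 -> b - b^3/6 <= sin b <= b.
Proof.
intros H. pose proof PI2_1.
  destruct (sin_bound b 0) as [H1 H2]; try lra.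
  unfold sin_approx in H1, H2. simpl sum_f_R0 in H1, H2. unfold sin_term in H1, H2. simpl Nat.mul in *. simpl Nat.add in *.
  replace (INR (Factorial.fact 1)) with 1 in * by (simpl; lra).
  replace (INR (Factorial.fact 3)) with 6 in * by (simpl; lra).
  replace (INR (Factorial.fact 5)) with 120 in * by (simpl; lra).
  simpl pow in *. split. lra.
  assert (HB: b*(b*(b*(b*(b*1)))) <= b*(b*(b*1))).
  { assert (0<= b*(b*b)) by (repeat apply Rmult_le_pos; lra). assert (b*b <= 1) by nra. nra. }
  lra.
Qed.

Lemma sin_bd b : Rabs b <= 1/2 -> Rabs (sin b - b) <= b * b /\ Rabs (sin b) <= Rabs b.
Proof. intros H. apply abs_bd in H. destruct (Rle_dec 0 b) as [Hb|Hb].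
  - destruct (sin_bd_pos b) as [H1 H2]; [lra|].
    assert (b^3/6 <= b*b) by (simpl; nra). assert (b*b <= b) by nra.
    split; apply Rabs_le; try split_Rabs; try lra.
  - apply Rnot_le_lt in Hb. destruct (sin_bd_pos (-b)) as [K1 K2]; [lra|]. rewrite sin_neg in K1, K2.
    assert ((-b)^3/6 <= b*b) by (assert (0 <= -b) by lra; assert (0 <= (-b)*(-b)) by nra; simpl; nra). assert (b*b <= -b) by nra.
    split; apply Rabs_le; try split_Rabs; try lra.
Qed.

Lemma cos_bd b : Rabs b <= 1/2 -> 0 <= 1 - cos b <= b * b / 2.
Proof. intros H. assert (E : cos b = 1 - 2 * (sin (b/2) * sin (b/2))).
  { rewrite <- Rmult_assoc, <- cos_2a_sin. f_equal; field. } rewrite E.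
  destruct (sin_bd (b/2)) as [_ H2]. apply abs_bd in H. apply Rabs_le; lra.
  assert (sin (b/2) * sin (b/2) <= (b/2)*(b/2)).
  { pose proof (Rsqr_le_abs_1 _ _ H2). unfold Rsqr in H0. exact H0. }
  assert ((b/2)*(b/2) = b*b/4) by field. assert (0 <= sin (b/2) * sin (b/2)) by nra.
  split; lra. Qed.

Lemma im_le_Cmod z : Rabs (Im z) <= Cmod z.
Proof. destruct z as [a b]. unfold Cmod, Im; simpl. rewrite <- sqrt_Rsqr_abs. apply sqrt_le_1_alt.
  unfold Rsqr. nra. Qed.

Lemma Cmod_le_sum z : Cmod z <= Rabs (Re z) + Rabs (Im z).
Proof. destruct z as [a b]. unfold Cmod, Re, Im; simpl.
  rewrite <- (sqrt_Rsqr (Rabs a + Rabs b)) by (pose proof (Rabs_pos a); pose proof (Rabs_pos b); lra).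
  apply sqrt_le_1_alt. unfold Rsqr. pose proof (Rabs_pos a); pose proof (Rabs_pos b).
  replace (a * (a * 1) + b * (b * 1)) with (Rabs a * Rabs a + Rabs b * Rabs b).
  nra. rewrite <- !Rabs_mult. rewrite !Rabs_right by nra. ring. Qed.

Lemma sq_le_of_abs x r : Rabs x <= r -> x * x <= r * r.
Proof. intros H. pose proof (Rsqr_le_abs_1 x r). unfold Rsqr in H0. apply H0.
  rewrite (Rabs_right r). auto. pose proof (Rabs_pos x). lra. Qed.

Lemma Cexp_bd d : Cmod d <= 1/2 ->
  Cmod (Cminus (Cminus (Cexp d) (RtoC 1)) d) <= 6 * (Cmod d * Cmod d).
Proof.
  intros Hd. set (r := Cmod d) in *.
  pose proof (re_le_Cmod d) as Ha. pose proof (im_le_Cmod d) as Hb. fold r in Ha, Hb.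
  eapply Rle_trans. apply Cmod_le_sum.
  destruct d as [a b]. unfold Re, Im in *; simpl in *.
  assert (Ha2 : Rabs a <= 1/2) by lra. assert (Hb2 : Rabs b <= 1/2) by lra.
  destruct (exp_bd a Ha2) as [E1 E2]. destruct (cos_bd b Hb2) as [C1 C2].
  destruct (sin_bd b Hb2) as [S1 S2].
  assert (Hea : 0 < exp a) by apply exp_pos. assert (He2 : exp a <= 2) by (apply exp_le2; apply abs_bd in Ha2; lra).
  pose proof (sq_le_of_abs a r Ha). pose proof (sq_le_of_abs b r Hb).
  assert (R1 : Rabs (exp a * cos b + - (1) + - a) <= 3 * (r * r)).
  { replace (exp a * cos b + - (1) + - a) with ((exp a - 1 - a) - exp a * (1 - cos b)) by ring.
    assert (0 <= exp a * (1 - cos b) <= b * b) by (split; nra).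
    apply Rabs_le. nra. }
  assert (R2 : Rabs (exp a * sin b + - 0 + - b) <= 3 * (r * r)).
  { replace (exp a * sin b + - 0 + - b) with ((exp a - 1) * sin b + (sin b - b)) by ring.
    eapply Rle_trans. apply Rabs_triang. rewrite Rabs_mult.
    assert (Rabs (exp a - 1) <= 2 * r).
    { apply Rabs_le. pose proof (abs_bd _ _ Ha). assert (2 * (a * a) <= Rabs a) by (apply abs_bd in Ha2; split_Rabs; nra).
      split_Rabs; lra. }
    assert (Rabs (exp a - 1) * Rabs (sin b) <= 2 * r * r).
    { apply Rmult_le_compat; auto using Rabs_pos. lra. }
    lra. }
  lra.
Qed.

Definition Ccont (f : C -> R) w := forall eps, 0 < eps -> Cnear w (fun y => Rabs (f y - f w) < eps).

Lemma Cnear_locally w (P : C -> Prop) : Cnear w P -> @locally C_UniformSpace w P.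
Proof. intros [d [Hd H]]. assert (Hs : 0 < sqrt 2) by (apply sqrt_lt_R0; lra).
  exists (mkposreal (d / sqrt 2) (Rdiv_lt_0_compat _ _ Hd Hs)). intros y Hy.
  apply H. pose proof (C_NormedModule_mixin_compat2 w y _ Hy) as K. simpl in K.
  replace (sqrt 2 * (d / sqrt 2)) with d in K by (field; lra). exact K. Qed.

Lemma Ccont_cont (f : C -> R) w : Ccont f w -> @continuous C_UniformSpace R_UniformSpace f w.
Proof. intros H P [eps Heps]. destruct (H eps (cond_pos eps)) as [d [Hd Hy]].
  apply Cnear_locally. exists d. split; auto. intros y Hy'. apply Heps. apply Hy. exact Hy'. Qed.

Lemma cont_Ccont (f : C -> R) w : @continuous C_UniformSpace R_UniformSpace f w -> Ccont f w.
Proof. intros H eps He. assert (L : @locally R_UniformSpace (f w) (fun x => Rabs (x - f w) < eps)).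
  { exists (mkposreal eps He). intros x Hx. exact Hx. }
  specialize (H _ L). destruct H as [d Hd]. exists (d : R). split. apply cond_pos.
  intros y Hy. apply Hd. apply C_NormedModule_mixin_compat1. exact Hy. Qed.

Lemma Ccont_Re w : Ccont Re w.
Proof. intros eps He. exists eps. split; auto. intros y Hy. eapply Rle_lt_trans; [|exact Hy].
  replace (Re y - Re w) with (Re (Cminus y w)). apply re_le_Cmod. unfold Cminus. rewrite re_plus, re_opp. ring. Qed.

Lemma Ccont_Im w : Ccont Im w.
Proof. intros eps He. exists eps. split; auto. intros y Hy. eapply Rle_lt_trans; [|exact Hy].
  replace (Im y - Im w) with (Im (Cminus y w)). apply im_le_Cmod. unfold Cminus. rewrite im_plus, im_opp. ring. Qed.

Lemma Ccont_Cmod w : Ccont Cmod w.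
Proof. intros eps He. exists eps. split; auto. intros y Hy. eapply Rle_lt_trans; [|exact Hy].
  pose proof (Cmod_lower w y). pose proof (Cmod_lower y w). rewrite Cmod_Cminus_sym in H0.
  apply Rabs_le. lra. Qed.

Lemma Ccont_Carg w : 0 < Cmod w + Re w -> Ccont Carg w.
Proof.
  intros Hw. apply cont_Ccont.
  apply (continuous_ext_loc _ (fun y => 2 * atan (Im y / (Cmod y + Re y)))).
  - apply Cnear_locally. assert (Hw2 : 0 < (Cmod w + Re w)/2) by lra.
    destruct (Ccont_Cmod w _ Hw2) as [d1 [Hd1 H1]].
    destruct (Ccont_Re w _ Hw2) as [d2 [Hd2 H2]].
    exists (Rmin d1 d2). split. apply Rmin_glb_lt; auto. intros y Hy.
    symmetry. apply Carg_eq.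
    assert (A1 := H1 y (Rlt_le_trans _ _ _ Hy (Rmin_l _ _))).
    assert (A2 := H2 y (Rlt_le_trans _ _ _ Hy (Rmin_r _ _))).
    apply Rabs_def2 in A1. apply Rabs_def2 in A2. lra.
  - apply (@continuous_mult C_UniformSpace R_AbsRing (fun _ => 2) (fun y => atan (Im y / (Cmod y + Re y)))).
    apply continuous_const.
    apply (continuous_comp (fun y => Im y / (Cmod y + Re y)) atan). 2: apply continuous_atan.
    apply (@continuous_mult C_UniformSpace R_AbsRing Im (fun y => / (Cmod y + Re y))).
    apply Ccont_cont, Ccont_Im.
    apply (continuous_comp (fun y => Cmod y + Re y) Rinv). 2: apply continuous_Rinv; lra.
    apply (@continuous_plus C_UniformSpace R_AbsRing R_NormedModule Cmod Re).
    apply Ccont_cont, Ccont_Cmod. apply Ccont_cont, Ccont_Re.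
Qed.

Lemma Cnear_and w P Q : Cnear w P -> Cnear w Q -> Cnear w (fun y => P y /\ Q y).
Proof. intros [d1 [H1 P1]] [d2 [H2 Q1]]. exists (Rmin d1 d2). split. apply Rmin_glb_lt; auto.
  intros y Hy. split. apply P1. eapply Rlt_le_trans; [exact Hy|apply Rmin_l].
  apply Q1. eapply Rlt_le_trans; [exact Hy|apply Rmin_r]. Qed.

Lemma Cnear_impl w (P Q : C -> Prop) : (forall y, P y -> Q y) -> Cnear w P -> Cnear w Q.
Proof. intros H [d [Hd Hy]]. exists d. split; auto. Qed.

Lemma near_pos w : 0 < Cmod w + Re w -> Cnear w (fun y => 0 < Cmod y + Re y).
Proof. intros Hw. assert (Hw2 : 0 < (Cmod w + Re w)/2) by lra.
  apply (Cnear_impl w (fun y => Rabs (Cmod y - Cmod w) < (Cmod w + Re w)/2 /\ Rabs (Re y - Re w) < (Cmod w + Re w)/2)).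
  intros y [A1 A2]. apply Rabs_def2 in A1. apply Rabs_def2 in A2. lra.
  apply Cnear_and. apply Ccont_Cmod; auto. apply Ccont_Re; auto. Qed.

Lemma Cln_cont w : 0 < Cmod w + Re w -> forall eps, 0 < eps ->
  Cnear w (fun y => Cmod (Cminus (Cln y) (Cln w)) < eps).
Proof. intros Hw eps He. assert (He2 : 0 < eps/2) by lra.
  assert (Hl : Ccont (fun y => ln (Cmod y)) w).
  { apply cont_Ccont. apply (continuous_comp Cmod ln). apply Ccont_cont, Ccont_Cmod.
    apply continuous_ln. apply Cmod_pos_of; auto. }
  apply (Cnear_impl w (fun y => Rabs (ln (Cmod y) - ln (Cmod w)) < eps/2 /\ Rabs (Carg y - Carg w) < eps/2)).
  2: apply Cnear_and; [apply Hl; auto | apply Ccont_Carg; auto].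
  intros y [A1 A2]. eapply Rle_lt_trans. apply Cmod_le_sum.
  unfold Cln, Cminus. rewrite re_plus, re_opp, im_plus, im_opp. simpl. unfold Rminus in A1, A2. lra. Qed.

Lemma CD_Cln w : 0 < Cmod w + Re w -> CD Cln w (Cinv w).
Proof.
  intros Hw. apply CD_bound. intros eps He.
  pose proof (Cmod_pos_of w Hw) as Hr. set (r := Cmod w) in *.
  set (rho := Rmin (1/12) (eps * r / 12)).
  assert (Hrho : 0 < rho) by (apply Rmin_glb_lt; [lra| apply Rdiv_lt_0_compat; [nra|lra]]).
  destruct (Cnear_and _ _ _ (Cln_cont w Hw rho Hrho) (near_pos w Hw)) as [dl [Hdl Hy]].
  exists dl. split; auto. intros y Hyw. destruct (Hy y Hyw) as [Hd Hp].
  set (d := Cminus (Cln y) (Cln w)) in *.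
  assert (Hw0 : w <> RtoC 0). { intro E. pose proof (Cmod_pos_of w Hw) as K. rewrite E, Cmod_0 in K. lra. }
  assert (Ey : y = Cmult w (Cexp d)).
  { rewrite <- (Cexp_Cln w Hw) at 1. rewrite <- Cexp_plus. rewrite <- (Cexp_Cln y Hp) at 1.
    f_equal. unfold d. Cring. }
  assert (Hd1 : Cmod d <= 1/2) by (assert (rho <= 1/12) by apply Rmin_l; lra).
  pose proof (Cexp_bd d Hd1) as B.
  set (E := Cexp d) in *. set (p := Cmod d) in *.
  assert (Hp0 : 0 <= p) by apply Cmod_ge_0.
  assert (Hp1 : p <= 1/12) by (assert (rho <= 1/12) by apply Rmin_l; lra).
  assert (Hp2 : p <= eps * r / 12) by (assert (rho <= eps * r / 12) by apply Rmin_r; lra).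
  replace (Cminus y w) with (Cmult w (Cminus E (RtoC 1))) by (rewrite Ey; Cring).
  replace (Cminus d (Cmult (Cmult w (Cminus E (RtoC 1))) (Cinv w))) with (Copp (Cminus (Cminus E (RtoC 1)) d)).
  2:{ Cfield. auto. }
  rewrite Cmod_opp.
  rewrite Cmod_mult. fold r.
  assert (L : p - 6 * (p * p) <= Cmod (Cminus E (RtoC 1))).
  { pose proof (Cmod_lower d (Cminus E (RtoC 1))). fold p in H.
    lra. }
  assert (6 * (p * p) <= eps * r * (p / 2)) by nra.
  assert (eps * r * (p/2) <= eps * (r * Cmod (Cminus E (RtoC 1)))).
  { replace (eps * r * (p/2)) with (eps * (r * (p/2))) by ring. apply Rmult_le_compat_l. lra.
    apply Rmult_le_compat_l. lra. nra. }
  lra.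
Qed.

Lemma CDerive_correct f z l : CD f z l -> CDerive f z = l.
Proof. intros H. unfold CDerive.
  assert (H1 : exists l', CD f z l') by (exists l; auto).
  pose proof (epsilon_spec (inhabits (RtoC 0)) _ H1) as H2.
  rewrite <- (is_C_derive_unique f z l H). symmetry. apply is_C_derive_unique. exact H2. Qed.

Lemma CDerive_n_on (U : C -> Prop) (f : C -> C) (g : nat -> C -> C) :
  (forall w, U w -> Cnear w U) -> (forall w, U w -> f w = g O w) ->
  (forall k w, U w -> CD (g k) w (g (S k) w)) -> forall m w, U w -> CDerive_n m f w = g m w.
Proof.
  intros HU H0 HD m. induction m; intros w Hw. simpl. auto.
  simpl. apply CDerive_correct. apply (CD_ext_near (g m)). 2: apply HD; auto.
  apply (Cnear_impl w U). intros t Ht. symmetry. apply IHm; auto. apply HU; auto. Qed.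

Definition Udom (w : C) := ~ (Im w = 0 /\ Re w <= 1).

Lemma Udom_open w : Udom w -> Cnear w Udom.
Proof. intros Hw. unfold Udom in Hw. destruct (Req_dec (Im w) 0) as [E|E].
  - assert (1 < Re w) by (destruct (Rle_dec (Re w) 1); [exfalso; auto| lra]).
    destruct (Ccont_Re w (Re w - 1)) as [d [Hd Hy]]. lra. exists d; split; auto.
    intros y Hy'. specialize (Hy y Hy'). apply Rabs_def2 in Hy. intros [_ K]. lra.
  - assert (0 < Rabs (Im w)) by (apply Rabs_pos_lt; auto).
    destruct (Ccont_Im w (Rabs (Im w))) as [d [Hd Hy]]. lra. exists d; split; auto.
    intros y Hy'. specialize (Hy y Hy'). intros [K _]. rewrite K in Hy.
    rewrite Rminus_0_l, Rabs_Ropp in Hy. lra. Qed.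

Lemma Cmod_gt_re z : Im z <> 0 -> Rabs (Re z) < Cmod z.
Proof. intros H. destruct z as [a b]. unfold Cmod, Re, Im in *; simpl in *.
  rewrite <- sqrt_Rsqr_abs. apply sqrt_lt_1_alt. split. apply Rle_0_sqr.
  unfold Rsqr. assert (0 < b * b) by (apply Rsqr_pos_lt in H; unfold Rsqr in H; auto). lra. Qed.

Lemma Udom_pos w eps : (eps = 1 \/ eps = -1) -> Udom w ->
  0 < Cmod (Cplus w (RtoC eps)) + Re (Cplus w (RtoC eps)).
Proof. intros He Hw. set (u := Cplus w (RtoC eps)).
  assert (Hre : Re u = Re w + eps) by (unfold u; rewrite re_plus, re_RtoC; auto).
  assert (Him : Im u = Im w) by (unfold u; rewrite im_plus, im_RtoC; ring).
  pose proof (re_le_Cmod u).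
  destruct (Req_dec (Im w) 0) as [E|E].
  - assert (1 < Re w) by (destruct (Rle_dec (Re w) 1); [exfalso; apply Hw; auto| lra]).
    assert (0 < Re u) by (rewrite Hre; destruct He; lra). rewrite Rabs_right in H; lra.
  - rewrite <- Him in E. pose proof (Cmod_gt_re u E). split_Rabs; lra. Qed.

Fixpoint Hn (k : nat) : R := match k with O => 0 | S k' => Hn k' + / INR (S k') end.
Fixpoint ff (e r : nat) : nat := match r with O => 1%nat | S r' => (ff e r' * (e - r'))%nat end.

Lemma ff_fact e r : (r <= e)%nat -> (ff e r * fact (e - r) = fact e)%nat.
Proof. induction r; intros H. simpl. rewrite Nat.sub_0_r. lia.
  simpl. rewrite <- IHr by lia. replace (e - r)%nat with (S (e - S r)) by lia. simpl. lia. Qed.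

Lemma ff_zero e r : (e < r)%nat -> ff e r = O.
Proof. induction r; intros H. lia. simpl. destruct (Nat.eq_dec r e). subst. rewrite Nat.sub_diag. lia.
  rewrite IHr by lia. lia. Qed.

Lemma ff_add e r s : ff e (r + s) = (ff e r * ff (e - r) s)%nat.
Proof. induction s. simpl. rewrite Nat.add_0_r. lia. rewrite Nat.add_succ_r. simpl. rewrite IHs.
  replace (e - (r + s))%nat with (e - r - s)%nat by lia. lia. Qed.

Lemma ff_self k : ff k k = fact k.
Proof. pose proof (ff_fact k k (le_n _)). rewrite Nat.sub_diag in H. simpl in H. lia. Qed.

Definition Lmono (eps : R) (k m : nat) (w : C) : C :=
  if Nat.leb m k then
    Cmult (RtoC (INR (ff k m))) (Cmult (Cpow (Cplus w (RtoC eps)) (k - m))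
      (Cplus (Cln (Cplus w (RtoC eps))) (RtoC (Hn k - Hn (k - m)))))
  else Cmult (RtoC ((-1)^(m - k - 1) * INR (fact k) * INR (fact (m - k - 1))))
             (Cinv (Cpow (Cplus w (RtoC eps)) (m - k))).

Lemma CD_Cln_shift eps w : 0 < Cmod (Cplus w (RtoC eps)) + Re (Cplus w (RtoC eps)) ->
  CD (fun y => Cln (Cplus y (RtoC eps))) w (Cinv (Cplus w (RtoC eps))).
Proof. intros H. eapply CD_eq. apply (CD_comp Cln (fun y => Cplus y (RtoC eps))).
  apply CD_Cln; auto. apply CD_shift. Cring. Qed.

Lemma u_nz w eps : 0 < Cmod (Cplus w (RtoC eps)) + Re (Cplus w (RtoC eps)) -> Cplus w (RtoC eps) <> RtoC 0.
Proof. intros H E. apply Cmod_pos_of in H. rewrite E, Cmod_0 in H. lra. Qed.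


Lemma CD_logterm eps e h w : 0 < Cmod (Cplus w (RtoC eps)) + Re (Cplus w (RtoC eps)) ->
  CD (fun y => Cmult (Cpow (Cplus y (RtoC eps)) e) (Cplus (Cln (Cplus y (RtoC eps))) (RtoC h))) w
   (Cplus (Cmult (Cmult (RtoC (INR e)) (Cpow (Cplus w (RtoC eps)) (pred e))) (Cplus (Cln (Cplus w (RtoC eps))) (RtoC h)))
          (Cmult (Cpow (Cplus w (RtoC eps)) e) (Cinv (Cplus w (RtoC eps))))).
Proof. intros Hp.
  apply (CD_mult (fun y => Cpow (Cplus y (RtoC eps)) e) (fun y => Cplus (Cln (Cplus y (RtoC eps))) (RtoC h))).
  apply CD_pow_shift.
  eapply CD_eq. apply (CD_plus (fun y => Cln (Cplus y (RtoC eps))) (fun _ => RtoC h)).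
  apply CD_Cln_shift; auto. apply CD_const. Cring. Qed.

Lemma CD_invpow eps j w : Cplus w (RtoC eps) <> RtoC 0 ->
  CD (fun y => Cinv (Cpow (Cplus y (RtoC eps)) j)) w
    (Cmult (Cmult (RtoC (INR j)) (Cpow (Cplus w (RtoC eps)) (pred j)))
       (Copp (Cinv (Cmult (Cpow (Cplus w (RtoC eps)) j) (Cpow (Cplus w (RtoC eps)) j))))).
Proof. intros Hu. apply (CD_comp Cinv (fun y => Cpow (Cplus y (RtoC eps)) j)).
  apply CD_inv. apply Cpow_nz; auto. apply CD_pow_shift. Qed.

Lemma CD_Lmono eps k m w : 0 < Cmod (Cplus w (RtoC eps)) + Re (Cplus w (RtoC eps)) ->
  CD (Lmono eps k m) w (Lmono eps k (S m) w).
Proof.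
  intros Hp. pose proof (u_nz w eps Hp) as Hu. unfold Lmono.
  destruct (Nat.leb_spec m k) as [Hmk|Hmk]; destruct (Nat.leb_spec (S m) k) as [Hmk'|Hmk']; try lia.
  -
    eapply CD_eq. apply CD_scal. apply CD_logterm; auto.
    set (u := Cplus w (RtoC eps)) in *.
    replace (k - m)%nat with (S (k - S m)) by lia. simpl pred.
    replace (Hn k - Hn (S (k - S m))) with (Hn k - Hn (k - S m) - / INR (S (k - S m))) by (simpl; ring).
    simpl ff. replace (k - m)%nat with (S (k - S m)) by lia.
    rewrite mult_INR. rewrite RtoC_mult.
    rewrite (RtoC_minus (Hn k - Hn (k - S m))).
    rewrite RtoC_inv by (apply not_0_INR; lia). simpl Cpow.
    assert (RtoC (INR (S (k - S m))) <> RtoC 0). { intro E. apply RtoC_inj in E. apply (not_0_INR (S (k - S m))); auto. }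
    Cfield. auto.
  -
    assert (m = k) by lia. subst m. rewrite Nat.sub_diag.
    replace (S k - k - 1)%nat with O by lia. replace (S k - k)%nat with 1%nat by lia.
    eapply CD_eq. apply CD_scal. apply CD_logterm; auto.
    rewrite ff_self. simpl Cpow. simpl pow. rewrite !RtoC_mult. simpl fact. rewrite INR_0, INR_1. Ceq. field. auto.
  -
    replace (S m - k)%nat with (S (m - k)) by lia. replace (S m - k - 1)%nat with (m - k)%nat by lia.
    destruct (m - k)%nat as [|j] eqn:Ej. lia. replace (S j - 1)%nat with j by lia.
    eapply CD_eq. apply CD_scal. apply CD_invpow; auto.
    set (u := Cplus w (RtoC eps)) in *.
    simpl pred. replace (S (S j) - 1)%nat with (S j) by lia.
    assert (E : (-1) ^ S j * INR (fact k) * INR (fact (S j)) = - ((-1)^j * INR (fact k) * INR (fact j)) * INR (S j)).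
    { rewrite fact_simpl, mult_INR. simpl pow. ring. }
    rewrite E. rewrite (RtoC_mult (- _)), RtoC_opp.
    set (c := RtoC ((-1)^j * INR (fact k) * INR (fact j))).
    simpl Cpow.
    assert (Cpow u j <> RtoC 0) by (apply Cpow_nz; auto).
    Cfield. auto.
Qed.

Definition PS (c : nat -> R) (e : nat -> nat) (s : R) (N r : nat) (w : C) : C :=
  Csum (fun i => Cmult (RtoC (c i * INR (ff (e i) r))) (Cpow (Cplus w (RtoC s)) (e i - r))) N.

Lemma CD_PS c e s N r w : CD (PS c e s N r) w (PS c e s N (S r) w).
Proof. unfold PS. apply (CD_Csum (fun i y => Cmult (RtoC (c i * INR (ff (e i) r))) (Cpow (Cplus y (RtoC s)) (e i - r)))).
  intros i _. eapply CD_eq. apply CD_scal. apply CD_pow_shift.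
  simpl ff. rewrite mult_INR. replace (pred (e i - r)) with (e i - S r)%nat by lia.
  rewrite !RtoC_mult. Cring. Qed.

Lemma CDerive_n_PS (f : C -> C) c e s N : (forall w, f w = PS c e s N O w) ->
  forall r w, CDerive_n r f w = PS c e s N r w.
Proof. intros H r w. apply (CDerive_n_on (fun _ => True) f (fun r => PS c e s N r)); auto.
  intros. exists 1. split; auto; lra. intros. apply CD_PS. Qed.

Definition binC (n k : nat) : R := if Nat.leb k n then Binomial.C n k else 0.

Lemma C_n_0 n : Binomial.C n 0 = 1.
Proof. unfold Binomial.C. rewrite Nat.sub_0_r. simpl fact. pose proof (INR_fact_neq_0 n). rewrite INR_1. field; auto. Qed.
Lemma C_n_n n : Binomial.C n n = 1.
Proof. unfold Binomial.C. rewrite Nat.sub_diag. simpl fact. pose proof (INR_fact_neq_0 n). rewrite INR_1. field; auto. Qed.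

Lemma binC_0 n : binC n 0 = 1.
Proof. unfold binC. simpl. apply C_n_0. Qed.

Lemma binC_S n k : binC (S n) (S k) = binC n k + binC n (S k).
Proof. unfold binC. destruct (Nat.leb_spec (S k) (S n)); destruct (Nat.leb_spec k n); destruct (Nat.leb_spec (S k) n); try lia.
  - rewrite <- Binomial.pascal by lia. auto.
  - assert (k = n) by lia. subst. rewrite !C_n_n. ring.
  - ring. Qed.

Lemma binC_big n k : (n < k)%nat -> binC n k = 0.
Proof. intros. unfold binC. destruct (Nat.leb_spec k n); [lia|auto]. Qed.

Lemma binomial_C (a b : C) n :
  Cpow (Cplus a b) n = Csum (fun k => Cmult (RtoC (binC n k)) (Cmult (Cpow a k) (Cpow b (n - k)))) (S n).
Proof.
  induction n.
  - simpl. rewrite binC_0. Cring.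
  - rewrite Csum_first. rewrite binC_0.
    assert (E : Csum (fun k => Cmult (RtoC (binC (S n) (S k))) (Cmult (Cpow a (S k)) (Cpow b (S n - S k)))) (S n)
      = Cplus (Cmult a (Csum (fun k => Cmult (RtoC (binC n k)) (Cmult (Cpow a k) (Cpow b (n - k)))) (S n)))
              (Csum (fun k => Cmult (RtoC (binC n (S k))) (Cmult (Cpow a (S k)) (Cpow b (n - k)))) (S n))).
    { rewrite Csum_mult_l. rewrite <- Csum_plus. apply Csum_ext. intros k Hk.
      rewrite binC_S, RtoC_plus. replace (S n - S k)%nat with (n - k)%nat by lia. simpl Cpow. Cring. }
    rewrite E. rewrite <- IHn.
    assert (E2 : Cplus (Cmult (RtoC 1) (Cmult (Cpow a 0) (Cpow b (S n - 0))))
                 (Csum (fun k => Cmult (RtoC (binC n (S k))) (Cmult (Cpow a (S k)) (Cpow b (n - k)))) (S n))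
      = Cmult b (Cpow (Cplus a b) n)).
    { rewrite IHn. rewrite Csum_mult_l.
      rewrite (Csum_first (fun k => Cmult b (Cmult (RtoC (binC n k)) (Cmult (Cpow a k) (Cpow b (n - k)))))).
      rewrite binC_0.
      change (Csum (fun k => Cmult (RtoC (binC n (S k))) (Cmult (Cpow a (S k)) (Cpow b (n - k)))) (S n))
        with (Cplus (Csum (fun k => Cmult (RtoC (binC n (S k))) (Cmult (Cpow a (S k)) (Cpow b (n - k)))) n)
                    (Cmult (RtoC (binC n (S n))) (Cmult (Cpow a (S n)) (Cpow b (n - n))))).
      rewrite (binC_big n (S n)) by lia.
      assert (Csum (fun k => Cmult (RtoC (binC n (S k))) (Cmult (Cpow a (S k)) (Cpow b (n - k)))) n =
              Csum (fun k => Cmult b (Cmult (RtoC (binC n (S k))) (Cmult (Cpow a (S k)) (Cpow b (n - S k))))) n).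
      { apply Csum_ext. intros k Hk. replace (n - k)%nat with (S (n - S k)) by lia. simpl Cpow. Cring. }
      rewrite H. replace (S n - 0)%nat with (S n) by lia. rewrite Nat.sub_0_r. simpl Cpow. Cring. }
    rewrite Cplus_assoc, (Cplus_comm _ (Cmult a _)), <- Cplus_assoc. rewrite E2.
    simpl Cpow. Cring.
Qed.

Lemma Cpow_sq w j : Cpow (Cmult w w) j = Cpow w (2 * j).
Proof. induction j. reflexivity. replace (2 * S j)%nat with (S (S (2 * j))) by lia. rewrite !Cpow_S. rewrite <- IHj. Cring. Qed.

Lemma RtoC_neg x : RtoC (- x) = Copp (RtoC x).
Proof. unfold RtoC, Copp. simpl. f_equal; ring. Qed.
Lemma RtoC_m1 : RtoC (-1) = Copp (RtoC 1).
Proof. unfold RtoC, Copp. simpl. f_equal; ring. Qed.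
Lemma RtoC_m2 : RtoC (-2) = Copp (RtoC 2).
Proof. unfold RtoC, Copp. simpl. f_equal; ring. Qed.

Lemma R_mono n w : Cpow (Cminus (Cmult w w) (RtoC 1)) n =
  PS (fun i => binC n i * (-1)^i) (fun i => 2*n - 2*i)%nat 0 (S n) 0 w.
Proof.
  replace (Cminus (Cmult w w) (RtoC 1)) with (Cplus (RtoC (-1)) (Cmult w w)).
  2:{ rewrite RtoC_m1. Cring. }
  rewrite binomial_C. unfold PS. apply Csum_ext. intros k Hk. simpl ff.
  rewrite Cpow_sq. rewrite Nat.sub_0_r. replace (2 * (n - k))%nat with (2 * n - 2 * k)%nat by lia.
  rewrite !RtoC_mult, RtoC_pow. rewrite INR_1. replace (Cplus w (RtoC 0)) with w by Cring. Cring. Qed.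

Lemma R_u n eps w : eps * eps = 1 -> Cpow (Cminus (Cmult w w) (RtoC 1)) n =
  PS (fun j => binC n j * (-2*eps)^(n-j)) (fun j => n + j)%nat eps (S n) 0 w.
Proof.
  intros He.
  replace (Cminus (Cmult w w) (RtoC 1)) with (Cmult (Cplus w (RtoC eps)) (Cplus (Cplus w (RtoC eps)) (RtoC (-2*eps)))).
  2:{ rewrite <- He. rewrite !RtoC_mult. rewrite RtoC_m2.
      Cring. }
  rewrite Cpow_mult_l. rewrite (binomial_C (Cplus w (RtoC eps)) (RtoC (-2*eps))). rewrite Csum_mult_l. unfold PS. apply Csum_ext. intros k Hk.
  simpl ff. rewrite Nat.sub_0_r, Cpow_add_r, INR_1. rewrite (RtoC_mult (binC n k * (-2*eps)^(n-k)) 1), (RtoC_mult (binC n k)), (RtoC_pow (-2*eps)). Cring. Qed.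

Lemma MU_eq n eps r w : eps * eps = 1 ->
  PS (fun i => binC n i * (-1)^i) (fun i => 2*n - 2*i)%nat 0 (S n) r w =
  PS (fun j => binC n j * (-2*eps)^(n-j)) (fun j => n + j)%nat eps (S n) r w.
Proof. intros He.
  rewrite <- (CDerive_n_PS (fun w => Cpow (Cminus (Cmult w w) (RtoC 1)) n) _ _ _ _ (R_mono n)).
  rewrite <- (CDerive_n_PS (fun w => Cpow (Cminus (Cmult w w) (RtoC 1)) n) _ _ _ _ (fun w => R_u n eps w He)).
  auto. Qed.

Lemma ln_le_sub1 y : 0 < y -> ln y <= y - 1.
Proof. intros H. pose proof (exp_ineq1_le (ln y)). rewrite exp_ln in H0 by auto. lra. Qed.

Lemma ln_step n : / INR (n + 2) <= ln (INR (n + 2)) - ln (INR (n + 1)) <= / INR (n + 1).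
Proof.
  assert (H1 : 0 < INR (n + 1)) by (apply lt_0_INR; lia).
  assert (H2 : INR (n + 2) = INR (n + 1) + 1) by (rewrite !plus_INR; simpl; ring).
  split.
  - pose proof (ln_le_sub1 (INR (n + 1) / INR (n + 2))) as K.
    rewrite ln_div in K by lra. assert (INR (n + 1) / INR (n + 2) - 1 = - / INR (n + 2)) by (rewrite H2; field; lra).
    rewrite H in K. assert (0 < INR (n + 1) / INR (n + 2)) by (apply Rdiv_lt_0_compat; lra). lra.
  - pose proof (ln_le_sub1 (INR (n + 2) / INR (n + 1))) as K.
    rewrite ln_div in K by lra. assert (INR (n + 2) / INR (n + 1) - 1 = / INR (n + 1)) by (rewrite H2; field; lra).
    rewrite H in K. assert (0 < INR (n + 2) / INR (n + 1)) by (apply Rdiv_lt_0_compat; lra). lra.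
Qed.

Lemma Hn_sum M : sum_f_R0 (fun j => / (1 + INR j)) M = Hn (S M).
Proof. induction M. cbn [sum_f_R0 Hn]. rewrite INR_1, INR_0. field.
  cbn [sum_f_R0]. rewrite IHM. cbn [Hn]. rewrite (S_INR (S M)). f_equal. f_equal. ring. Qed.

Lemma Hn_sum_p p M : sum_f_R0 (fun j => / (INR (p + 1) + INR j)) M = Hn (M + p + 1) - Hn p.
Proof. induction M. cbn [sum_f_R0]. rewrite Nat.add_0_l, Nat.add_1_r. cbn [Hn]. rewrite INR_0, Rplus_0_r. ring.
  cbn [sum_f_R0]. rewrite IHM. replace (S M + p + 1)%nat with (S (M + p + 1)) by lia. cbn [Hn].
  rewrite <- plus_INR. replace (p + 1 + S M)%nat with (S (M + p + 1)) by lia. ring. Qed.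

Lemma ln_le_Hn N : ln (INR (N + 1)) <= Hn N.
Proof. induction N. simpl. rewrite ln_1. lra.
  pose proof (ln_step N). replace (S N + 1)%nat with (N + 2)%nat by lia. cbn [Hn].
  replace (S N) with (N + 1)%nat by lia. lra. Qed.

Definition sdig (x : R) (N : nat) := ln (INR N) - sum_f_R0 (fun j => / (x + INR j)) N.

Lemma sdig1_lim : exists L : R, is_lim_seq (sdig 1) (Finite L).
Proof.
  destruct (ex_finite_lim_seq_incr (fun N => sdig 1 (S N)) 0) as [L HL].
  - intros N. unfold sdig. rewrite !Hn_sum. cbn [Hn].
    pose proof (ln_step N). replace (S (S N)) with (N + 2)%nat by lia. replace (S N) with (N + 1)%nat by lia.
    replace (S (N + 2)) with (N + 3)%nat by lia.
    assert (/ INR (N + 3) <= / INR (N + 2)).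
    { apply Rinv_le_contravar. apply lt_0_INR; lia. apply le_INR; lia. }
    replace (INR (N + 2 + 1)) with (INR (N + 3)) by (f_equal; lia). lra.
  - intros N. unfold sdig. rewrite Hn_sum. replace (S N) with (N + 1)%nat by lia.
    pose proof (ln_le_Hn N). replace (S (N + 1)) with (S (S N)) by lia. cbn [Hn].
    assert (0 <= / INR (S N)) by (left; apply Rinv_0_lt_compat, lt_0_INR; lia).
    assert (0 <= / INR (S (S N))) by (left; apply Rinv_0_lt_compat, lt_0_INR; lia).
    replace (N + 1)%nat with (S N) in * by lia. lra.
  - exists L. apply is_lim_seq_incr_1. exact HL.
Qed.

Lemma tail_lim p : is_lim_seq (fun N => Hn (N + p + 1) - Hn (N + 1)) 0.
Proof. induction p.
  - eapply is_lim_seq_ext. 2: apply is_lim_seq_const. intros N. rewrite Nat.add_0_r. ring.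
  - assert (Hi : is_lim_seq (fun N => / INR (N + p + 2)) 0).
    { assert (K : is_lim_seq (fun N => / INR N) 0).
      { replace (Finite 0) with (Rbar_inv p_infty) by reflexivity.
        apply is_lim_seq_inv. apply is_lim_seq_INR. discriminate. }
      apply (is_lim_seq_incr_n _ (p + 2)) in K.
      eapply is_lim_seq_ext. 2: exact K. intros N. cbv beta. rewrite Nat.add_assoc. reflexivity. }
    eapply is_lim_seq_ext. 2: { replace 0 with (0 + 0) by ring. apply is_lim_seq_plus'. exact IHp. exact Hi. }
    intros N. replace (N + S p + 1)%nat with (S (N + p + 1)) by lia. cbn [Hn].
    replace (S (N + p + 1)) with (N + p + 2)%nat by lia. ring.
Qed.

Lemma digamma_p p : exists L, forall q, (q <= p)%nat -> digamma (INR (q + 1)) = L + Hn q.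
Proof.
  destruct sdig1_lim as [L HL]. exists L. intros q _.
  unfold digamma. replace (L + Hn q) with (real (Finite (L + Hn q))) by reflexivity. f_equal.
  apply is_lim_seq_unique.
  eapply is_lim_seq_ext. 2:{ replace (L + Hn q) with (L - 0 + Hn q) by ring.
    apply is_lim_seq_plus'. apply is_lim_seq_minus'. exact HL. apply (tail_lim q). apply is_lim_seq_const. }
  intros N. simpl. unfold sdig. rewrite Hn_sum_p. rewrite Hn_sum. replace (S N) with (N + 1)%nat by lia. ring.
Qed.

Lemma digamma_diff k m : digamma (INR (k + m + 1)) - digamma (INR (k + 1)) = Hn (k + m) - Hn k.
Proof. destruct (digamma_p (k + m)) as [L HL]. rewrite (HL (k + m)%nat), (HL k) by lia. ring. Qed.

Lemma fact_nz k : INR (fact k) <> 0.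
Proof. apply INR_fact_neq_0. Qed.

Lemma ff_INR e r : (r <= e)%nat -> INR (ff e r) = INR (fact e) / INR (fact (e - r)).
Proof. intros H. rewrite <- (ff_fact e r H). rewrite mult_INR. field. apply fact_nz. Qed.

Lemma binC_eq n k : (k <= n)%nat -> binC n k = INR (fact n) / (INR (fact k) * INR (fact (n - k))).
Proof. intros H. unfold binC. destruct (Nat.leb_spec k n); [|lia]. reflexivity. Qed.

Lemma poch_half m r : poch (INR m + / 2) r =
  INR (fact (2 * (m + r))) * INR (fact m) / (4 ^ r * INR (fact (m + r)) * INR (fact (2 * m))).
Proof. induction r.
  - cbn [poch pow]. rewrite Nat.add_0_r. field. split; apply fact_nz.
  - cbn [poch]. rewrite IHr. replace (2 * (m + S r))%nat with (S (S (2 * (m + r)))) by lia.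
    replace (m + S r)%nat with (S (m + r)) by lia.
    rewrite !fact_simpl, !mult_INR. rewrite !S_INR. rewrite mult_INR, plus_INR. cbn [pow]. replace (INR 2) with 2 by (simpl; lra).
    pose proof (fact_nz (2 * (m + r))). pose proof (fact_nz (m + r)). pose proof (fact_nz (2 * m)).
    pose proof (pos_INR m). pose proof (pos_INR r). field. repeat split; try lra. apply pow_nonzero. lra.
Qed.

Lemma div2_bd n : (2 * Nat.div2 n <= n /\ n < 2 * Nat.div2 n + 2)%nat.
Proof. pose proof (Nat.div2_odd n). destruct (Nat.odd n); simpl in H; lia. Qed.

Lemma Csum_extend f N1 N2 : (N1 <= N2)%nat -> (forall k, (N1 <= k < N2)%nat -> f k = RtoC 0) ->
  Csum f N2 = Csum f N1.
Proof. intros H Hz. replace N2 with (N1 + (N2 - N1))%nat by lia. rewrite Csum_split.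
  rewrite (Csum_zero (fun k => f (N1 + k)%nat)). Cring. intros k Hk. apply Hz. lia. Qed.

Definition PSM n r w := PS (fun i => binC n i * (-1)^i) (fun i => 2*n - 2*i)%nat 0 (S n) r w.
Definition PSU n eps r w := PS (fun j => binC n j * (-2*eps)^(n-j)) (fun j => n + j)%nat eps (S n) r w.

Lemma leg_M n w : Cmult (Legendre n w) (RtoC (2^n * INR (fact n))) = PSM n n w.
Proof.
  unfold Legendre, PSM, PS. destruct (div2_bd n) as [D1 D2].
  rewrite (Csum_extend _ (S (Nat.div2 n)) (S n)) by (try lia; intros k Hk;
    rewrite ff_zero by lia; rewrite Rmult_0_r; Cring).
  rewrite Cmult_comm, Cmult_assoc, Csum_mult_l. apply Csum_ext. intros k Hk.
  replace (2 * n - 2 * k - n)%nat with (n - 2 * k)%nat by lia.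
  replace (Cplus w (RtoC 0)) with w by Cring.
  assert (Hr : 2 ^ n * INR (fact n) * / 2 ^ n * ((-1) ^ k * Binomial.C n k * Binomial.C (2 * n - 2 * k) n)
     = binC n k * (-1) ^ k * INR (ff (2 * n - 2 * k) n)).
  { rewrite binC_eq by lia. rewrite ff_INR by lia. unfold Binomial.C.
    pose proof (fact_nz n). pose proof (fact_nz k). pose proof (fact_nz (n - k)).
    pose proof (fact_nz (2 * n - 2 * k - n)). field. repeat split; auto. apply pow_nonzero; lra. }
  rewrite <- Hr. rewrite !RtoC_mult. Cring.
Qed.

Lemma pow2_split a b : 2 ^ (a + b) = 2 ^ a * 2 ^ b.
Proof. apply pow_add. Qed.

Lemma geg_M n m w : (m <= n)%nat ->
  Cmult (Cmult (RtoC (INR (fact (2*m)) / (2^m * INR (fact m)))) (Gegenbauer (n - m) (INR m + /2) w))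
        (RtoC (2^n * INR (fact n))) = PSM n (n + m) w.
Proof.
  intros Hmn. unfold Gegenbauer, PSM, PS. destruct (div2_bd (n - m)) as [D1 D2].
  rewrite (Csum_extend _ (S (Nat.div2 (n - m))) (S n)) by (try lia; intros k Hk;
    rewrite ff_zero by lia; rewrite Rmult_0_r; Cring).
  rewrite Cmult_comm, Cmult_assoc, Csum_mult_l. apply Csum_ext. intros k Hk.
  assert (Hk2 : (2 * k <= n - m)%nat) by lia.
  destruct (Nat.le_exists_sub (2 * k) (n - m) Hk2) as [s [Hs _]].
  assert (En : n = (m + 2 * k + s)%nat) by lia. subst n.
  replace (2 * (m + 2 * k + s) - 2 * k - (m + 2 * k + s + m))%nat with s by lia.
  replace (m + 2 * k + s - m - 2 * k)%nat with s by lia.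
  replace (m + 2 * k + s - m - k)%nat with (k + s)%nat by lia.
  replace (Cplus w (RtoC 0)) with w by Cring.
  rewrite Cpow_mult_l, <- RtoC_pow.
  set (W := Cpow w s).
  assert (Hr : 2 ^ (m + 2 * k + s) * INR (fact (m + 2 * k + s)) * (INR (fact (2 * m)) / (2 ^ m * INR (fact m))) *
     ((-1) ^ k * poch (INR m + / 2) (k + s) / (INR (fact k) * INR (fact s))) * 2 ^ s
     = binC (m + 2 * k + s) k * (-1) ^ k * INR (ff (2 * (m + 2 * k + s) - 2 * k) (m + 2 * k + s + m))).
  { rewrite binC_eq by lia. rewrite ff_INR by lia. rewrite poch_half.
    replace (2 * (m + 2 * k + s) - 2 * k - (m + 2 * k + s + m))%nat with s by lia.
    replace (m + 2 * k + s - k)%nat with (m + k + s)%nat by lia.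
    replace (2 * (m + (k + s)))%nat with (2 * (m + 2 * k + s) - 2 * k)%nat by lia.
    replace (m + (k + s))%nat with (m + k + s)%nat by lia.
    replace (4 ^ (k + s)) with (2 ^ k * 2 ^ k * 2 ^ s * 2 ^ s).
    2:{ replace 4 with (2 ^ 2) by (simpl; lra). rewrite <- pow_mult. replace (2 * (k + s))%nat with (k + k + s + s)%nat by lia.
        rewrite !pow_add. ring. }
    replace (2 ^ (m + 2 * k + s)) with (2 ^ m * 2 ^ k * 2 ^ k * 2 ^ s)
      by (replace (m + 2 * k + s)%nat with (m + k + k + s)%nat by lia; rewrite !pow_add; ring).
    pose proof (fact_nz (m + 2 * k + s)). pose proof (fact_nz k). pose proof (fact_nz s).
    pose proof (fact_nz (m + k + s)). pose proof (fact_nz (2 * m)). pose proof (fact_nz m).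
    pose proof (fact_nz (2 * (m + 2 * k + s) - 2 * k)).
    assert (2 ^ m <> 0) by (apply pow_nonzero; lra). assert (2 ^ k <> 0) by (apply pow_nonzero; lra).
    assert (2 ^ s <> 0) by (apply pow_nonzero; lra).
    field. repeat split; auto. }
  rewrite <- Hr. rewrite !RtoC_mult. Cring.
Qed.

Definition acoef n eps k := (-eps)^(n+k) * INR (fact (n+k)) / (INR (fact k) * INR (fact k) * INR (fact (n-k)) * 2^k).

Lemma sign_even eps a k : eps * eps = 1 -> (-eps) ^ (2 * k + a) = (-eps) ^ a.
Proof. intros H. rewrite pow_add, pow_mult. replace ((-eps)^2) with 1 by (simpl; nra). rewrite pow1. ring. Qed.

Lemma U_sum n eps m w : eps * eps = 1 -> (m <= n)%nat ->
  Cmult (Csum (fun j => Cmult (RtoC (acoef n eps (m + j) * INR (ff (m + j) m))) (Cpow (Cplus w (RtoC eps)) j)) (S (n - m)))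
        (RtoC (2^n * INR (fact n))) = PSU n eps (n + m) w.
Proof.
  intros He Hmn. unfold PSU, PS.
  replace (S n) with (m + S (n - m))%nat by lia. rewrite Csum_split.
  rewrite (Csum_zero (fun i => Cmult (RtoC (binC n i * (-2 * eps) ^ (n - i) * INR (ff (n + i) (n + m))))
        (Cpow (Cplus w (RtoC eps)) (n + i - (n + m))))).
  2:{ intros k Hk. rewrite ff_zero by lia. rewrite Rmult_0_r. Cring. }
  rewrite Cplus_0_l. rewrite Csum_mult_r. apply Csum_ext. intros j Hj.
  destruct (Nat.le_exists_sub j (n - m) ltac:(lia)) as [s [Hs _]].
  assert (En : n = (m + j + s)%nat) by lia. subst n.
  replace (m + j + s + (m + j) - (m + j + s + m))%nat with j by lia.
  set (U := Cpow (Cplus w (RtoC eps)) j).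
  assert (Hr : acoef (m + j + s) eps (m + j) * INR (ff (m + j) m) * (2 ^ (m + j + s) * INR (fact (m + j + s))) =
     binC (m + j + s) (m + j) * (-2 * eps) ^ (m + j + s - (m + j)) * INR (ff (m + j + s + (m + j)) (m + j + s + m))).
  { unfold acoef. rewrite binC_eq by lia. rewrite !ff_INR by lia.
    replace (m + j + s - (m + j))%nat with s by lia.
    replace (m + j - m)%nat with j by lia.
    replace (m + j + s + (m + j) - (m + j + s + m))%nat with j by lia.
    replace (m + j + s + (m + j))%nat with (2 * (m + j) + s)%nat by lia.
    rewrite sign_even by auto.
    replace ((-2 * eps) ^ s) with ((-eps) ^ s * 2 ^ s) by (rewrite <- Rpow_mult_distr; f_equal; ring).
    replace (2 ^ (m + j + s)) with (2 ^ (m + j) * 2 ^ s) by (rewrite <- pow_add; reflexivity).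
    pose proof (fact_nz (m + j)). pose proof (fact_nz j). pose proof (fact_nz s). pose proof (fact_nz (m + j + s)).
    pose proof (fact_nz (2 * (m + j) + s)).
    assert (2 ^ (m + j) <> 0) by (apply pow_nonzero; lra).
    field. repeat split; auto. }
  rewrite <- Hr. rewrite !RtoC_mult. Cring.
Qed.

Definition Lsum n eps m w := Csum (fun k => Cmult (RtoC (acoef n eps k)) (Lmono eps k m w)) (S n).

Lemma Lsum_deriv n eps m w : (eps = 1 \/ eps = -1) -> Udom w -> CD (Lsum n eps m) w (Lsum n eps (S m) w).
Proof. intros He Hw. unfold Lsum.
  apply (CD_Csum (fun k y => Cmult (RtoC (acoef n eps k)) (Lmono eps k m y))).
  intros k _. apply CD_scal. apply CD_Lmono. apply Udom_pos; auto. Qed.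

Lemma fn_nz n : RtoC (2 ^ n * INR (fact n)) <> RtoC 0.
Proof. intro E. apply RtoC_inj in E. apply Rmult_integral in E. destruct E as [E|E].
  apply (pow_nonzero 2 n); [lra|auto]. apply (fact_nz n); auto. Qed.

Lemma Lsum_0 n eps w : (eps = 1 \/ eps = -1) ->
  Cmult (Legendre n w) (Cln (Cplus w (RtoC eps))) = Lsum n eps 0 w.
Proof.
  intros He. assert (He2 : eps * eps = 1) by (destruct He; subst; lra).
  assert (HL : Legendre n w = Csum (fun j => Cmult (RtoC (acoef n eps (0 + j) * INR (ff (0 + j) 0))) (Cpow (Cplus w (RtoC eps)) j)) (S (n - 0))).
  { apply (Cmult_reg_r _ _ _ (fn_nz n)) || idtac.
    assert (K := U_sum n eps 0 w He2 (Nat.le_0_l n)). rewrite Nat.add_0_r in K.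
    unfold PSU in K. rewrite <- MU_eq in K by auto. fold (PSM n n w) in K. rewrite <- leg_M in K.
    pose proof (fn_nz n).
    transitivity (Cmult (Cmult (Legendre n w) (RtoC (2 ^ n * INR (fact n)))) (Cinv (RtoC (2 ^ n * INR (fact n))))).
    Cfield; auto. rewrite <- K. Cfield; auto. }
  rewrite HL. unfold Lsum. rewrite Nat.sub_0_r. rewrite Csum_mult_r. apply Csum_ext. intros k Hk.
  unfold Lmono. simpl Nat.leb. rewrite Nat.sub_0_r. simpl ff. rewrite Rminus_diag. simpl Nat.add.
  rewrite INR_1, Rmult_1_r. Cring.
Qed.

Lemma CDerive_main n eps m z : (eps = 1 \/ eps = -1) -> Udom z ->
  CDerive_n m (fun w => Cmult (Legendre n w) (Cln (Cplus w (RtoC eps)))) z = Lsum n eps m z.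
Proof. intros He Hz. apply (CDerive_n_on Udom _ (Lsum n eps)); auto.
  apply Udom_open. intros w _. apply Lsum_0; auto. intros k w Hw. apply Lsum_deriv; auto. Qed.

Lemma Csum_opp f n : Copp (Csum f n) = Csum (fun k => Copp (f k)) n.
Proof. induction n; simpl. Cring. rewrite <- IHn. Cring. Qed.

Lemma partA n eps m z : (eps = 1 \/ eps = -1) -> (m <= n)%nat -> Cplus z (RtoC eps) <> RtoC 0 ->
  Csum (fun k => Cmult (RtoC (acoef n eps k)) (Lmono eps k m z)) m =
  Copp (Cmult (RtoC ((- eps) ^ n * (-1) ^ m))
       (Cmult (Cinv (Cpow (Cplus z (RtoC eps)) m))
          (Csum (fun k =>
                   Cmult (RtoC (eps ^ k * (INR (fact (k + n)) * INR (fact (m - k - 1)))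
                                / (INR (fact k) * INR (fact (n - k)))))
                         (Cpow (Cmult (Cplus z (RtoC eps)) (RtoC (/ 2))) k))
                m))).
Proof.
  intros He Hmn Hu. assert (He2 : eps * eps = 1) by (destruct He; subst; lra).
  rewrite Csum_mult_l, Csum_mult_l, Csum_opp. apply Csum_ext. intros k Hk.
  unfold Lmono. destruct (Nat.leb_spec m k) as [Hmk|_]; [lia|].
  destruct (Nat.le_exists_sub (S k) m Hk) as [t [Ht _]]. subst m.
  replace (t + S k - k - 1)%nat with t by lia. replace (t + S k - k)%nat with (S t) by lia.
  set (u := Cplus z (RtoC eps)) in *.
  replace (Cpow u (t + S k)) with (Cmult (Cpow u (S t)) (Cpow u k)) by (rewrite <- Cpow_add_r; f_equal; lia).
  rewrite Cpow_mult_l. rewrite <- (RtoC_pow (/ 2)).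
  assert (Hr : acoef n eps k * ((-1) ^ t * INR (fact k) * INR (fact t)) =
     - ((-eps) ^ n * (-1) ^ (t + S k)) * (eps ^ k * (INR (fact (k + n)) * INR (fact (t + S k - k - 1))) /
        (INR (fact k) * INR (fact (n - k)))) * (/ 2) ^ k).
  { unfold acoef. replace (t + S k - k - 1)%nat with t by lia. rewrite (Nat.add_comm k n).
    replace (-eps) with (-1 * eps) by ring. rewrite !Rpow_mult_distr. rewrite pow_add.
    rewrite pow_add. replace (S k) with (k + 1)%nat by lia. rewrite pow_add.
    rewrite <- Rinv_pow by lra.
    pose proof (fact_nz k). pose proof (fact_nz (n - k)). pose proof (fact_nz t). pose proof (fact_nz (n + k)).
    assert (2 ^ k <> 0) by (apply pow_nonzero; lra).
    rewrite pow_add. simpl pow. field. repeat split; auto. }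
  assert (Cpow u k <> RtoC 0) by (apply Cpow_nz; auto).
  assert (Cpow u (S t) <> RtoC 0) by (apply Cpow_nz; auto).
  assert (E2 : RtoC (acoef n eps k) = Cmult (RtoC (acoef n eps k * ((-1) ^ t * INR (fact k) * INR (fact t))))
      (Cinv (RtoC ((-1) ^ t * INR (fact k) * INR (fact t))))).
  { rewrite RtoC_mult. assert (RtoC ((-1) ^ t * INR (fact k) * INR (fact t)) <> RtoC 0).
    { intro E. apply RtoC_inj in E. assert ((-1)^t <> 0) by (apply pow_nonzero; lra).
      pose proof (fact_nz k). pose proof (fact_nz t). apply Rmult_integral in E. destruct E as [E|E]; auto.
      apply Rmult_integral in E. destruct E; auto. }
    Cfield. auto. }
  rewrite Hr in E2. rewrite E2. rewrite !RtoC_mult. rewrite RtoC_neg, RtoC_mult.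
  replace (t + S k - k - 1)%nat with t by lia.
  assert (RtoC ((-1)^t) <> RtoC 0) by (intro E; apply RtoC_inj in E; apply (pow_nonzero (-1) t); lra).
  assert (RtoC (INR (fact k)) <> RtoC 0) by (intro E; apply RtoC_inj in E; apply (fact_nz k); auto).
  assert (RtoC (INR (fact t)) <> RtoC 0) by (intro E; apply RtoC_inj in E; apply (fact_nz t); auto).
  Cfield. auto.
Qed.

Lemma partB n eps m z : (eps = 1 \/ eps = -1) -> (m <= n)%nat ->
  Csum (fun j => Cmult (RtoC (acoef n eps (m + j))) (Lmono eps (m + j) m z)) (S (n - m)) =
  Cplus (Cmult (RtoC (INR (fact (2*m)) / (2 ^ m * INR (fact m))))
       (Cmult (Gegenbauer (n - m) (INR m + / 2) z) (Cln (Cplus z (RtoC eps)))))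
   (Cmult (RtoC ((- eps) ^ (n + m) / 2 ^ m))
      (Csum (fun k =>
               Cmult (RtoC ((- eps) ^ k * INR (fact (k + n + m))
                            / (INR (fact k) * INR (fact (k + m)) * INR (fact (n - m - k)))
                            * (digamma (INR (k + m + 1)) - digamma (INR (k + 1)))))
                     (Cpow (Cmult (Cplus z (RtoC eps)) (RtoC (/ 2))) k))
            (S (n - m)))).
Proof.
  intros He Hmn. assert (He2 : eps * eps = 1) by (destruct He; subst; lra).
  set (u := Cplus z (RtoC eps)).
  assert (HG : Csum (fun j => Cmult (RtoC (acoef n eps (m + j) * INR (ff (m + j) m))) (Cpow u j)) (S (n - m))
     = Cmult (RtoC (INR (fact (2*m)) / (2 ^ m * INR (fact m)))) (Gegenbauer (n - m) (INR m + / 2) z)).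
  { pose proof (U_sum n eps m z He2 Hmn) as K. unfold PSU in K. rewrite <- MU_eq in K by auto.
    fold (PSM n (n + m) z) in K. rewrite <- geg_M in K by auto. pose proof (fn_nz n).
    transitivity (Cmult (Cmult (Csum (fun j => Cmult (RtoC (acoef n eps (m + j) * INR (ff (m + j) m))) (Cpow u j)) (S (n - m))) (RtoC (2 ^ n * INR (fact n)))) (Cinv (RtoC (2 ^ n * INR (fact n))))).
    Cfield; auto. unfold u. rewrite K. Cfield; auto. }
  rewrite (Cmult_assoc (RtoC (INR (fact (2*m)) / (2 ^ m * INR (fact m))))). rewrite <- HG.
  rewrite Csum_mult_r, Csum_mult_l, <- Csum_plus. apply Csum_ext. intros j Hj.
  unfold Lmono. destruct (Nat.leb_spec m (m + j)) as [_|K]; [|lia].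
  replace (m + j - m)%nat with j by lia. fold u.
  rewrite (Nat.add_comm j m) at 1. rewrite digamma_diff. rewrite (Nat.add_comm j m).
  destruct (Nat.le_exists_sub j (n - m) ltac:(lia)) as [s [Hs _]].
  assert (En : n = (m + j + s)%nat) by lia. subst n.
  assert (Hr : acoef (m + j + s) eps (m + j) * INR (ff (m + j) m) =
     (- eps) ^ (m + j + s + m) / 2 ^ m * ((- eps) ^ j * INR (fact (j + (m + j + s) + m))
                            / (INR (fact j) * INR (fact (m + j)) * INR (fact (m + j + s - m - j)))) * (/ 2) ^ j).
  { unfold acoef. rewrite ff_INR by lia. replace (m + j - m)%nat with j by lia.
    replace (m + j + s - m - j)%nat with s by lia. replace (m + j + s - (m + j))%nat with s by lia.
    replace (j + (m + j + s) + m)%nat with (m + j + s + (m + j))%nat by lia.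
    rewrite <- Rinv_pow by lra.
    replace (m + j + s + (m + j))%nat with ((m + j + s + m) + j)%nat by lia. rewrite (pow_add (-eps) (m + j + s + m) j).
    rewrite (pow_add 2 m j).
    pose proof (fact_nz (m + j)). pose proof (fact_nz j). pose proof (fact_nz s). pose proof (fact_nz (m + j + s + m + j)).
    assert (2 ^ m <> 0) by (apply pow_nonzero; lra). assert (2 ^ j <> 0) by (apply pow_nonzero; lra).
    field. repeat split; auto. }
  rewrite Cpow_mult_l, <- RtoC_pow.
  rewrite Cmult_assoc, <- RtoC_mult, Hr.
  set (L := Cln u). set (U := Cpow u j). set (h := Hn (m + j) - Hn j).
  rewrite !RtoC_mult. Cring.
Qed.

Theorem mainTheorem4 (m n : nat) (eps : R) (z : C) :
  (m <= n)%nat ->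
  (eps = 1 \/ eps = -1) ->
  ~ (Im z = 0 /\ Re z <= 1) ->
  CDerive_n m (fun w => Cmult (Legendre n w) (Cln (Cplus w (RtoC eps)))) z =
  Cplus
   (Cminus
    (Cmult (RtoC (INR (fact (2*m)) / (2 ^ m * INR (fact m))))
       (Cmult (Gegenbauer (n - m) (INR m + / 2) z) (Cln (Cplus z (RtoC eps)))))
    (Cmult (RtoC ((- eps) ^ n * (-1) ^ m))
       (Cmult (Cinv (Cpow (Cplus z (RtoC eps)) m))
          (Csum (fun k =>
                   Cmult (RtoC (eps ^ k * (INR (fact (k + n)) * INR (fact (m - k - 1)))
                                / (INR (fact k) * INR (fact (n - k)))))
                         (Cpow (Cmult (Cplus z (RtoC eps)) (RtoC (/ 2))) k))
                m))))
   (Cmult (RtoC ((- eps) ^ (n + m) / 2 ^ m))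
      (Csum (fun k =>
               Cmult (RtoC ((- eps) ^ k * INR (fact (k + n + m))
                            / (INR (fact k) * INR (fact (k + m)) * INR (fact (n - m - k)))
                            * (digamma (INR (k + m + 1)) - digamma (INR (k + 1)))))
                     (Cpow (Cmult (Cplus z (RtoC eps)) (RtoC (/ 2))) k))
            (S (n - m)))).
Proof.
  intros Hmn He Hz.
  assert (Hu : Cplus z (RtoC eps) <> RtoC 0) by (apply u_nz; apply Udom_pos; auto).
  rewrite CDerive_main by auto. unfold Lsum.
  replace (S n) with (m + S (n - m))%nat by lia. rewrite Csum_split.
  rewrite (partA n eps m z He Hmn Hu). rewrite (partB n eps m z He Hmn).
  match goal with |- Cplus (Copp ?a) (Cplus ?b ?c) = _ => set (A := a); set (B := b); set (D := c) end.
  unfold Cminus. Cring.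
Qed.
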